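(* Let $n\ge w\ge t\ge1$ and $q\ge1$ be integers, let $m=\binom{w}{t}$, and suppose $A=\{A_1,\dots,A_m\}$ is a partition of $Q_q^n(t)$ into $m$ sets each of which is an $A(n,q,w,t)$ design (all of them then have the same cardinality $N$). Let $GA$ be the $m$-partite hypergraph with parts $A_1,\dots,A_m$ in which a collection $\{b_1,\dots,b_m\}$ with $b_i\in A_i$ is an edge if and only if there exists $a\in Q_q^n(w)$ with $F(a)\subseteq F(b_i)$ for all $i$ (equivalently, $\{b_1,\dots,b_m\}$ is the set of all words of weight $t$ extended by $a$). Then the number of $H(n,q,w,t)$ designs equals $\operatorname{per}_m M(GA)$.
   Context: $Q_q=\{0,\dots,q-1\}$, $Q_{q*}=Q_q\cup\{*\}$. A word $u\in Q_{q*}^n$ has weight $n$ minus its number of $*$ symbols and corresponds to the face $F(u)=\{x\in Q_q^n: x_i=u_i\text{ whenever }u_i\ne *\}$ of the hypercube $Q_q^n$. $Q_q^n(t)$ denotes the set of words of weight $t$ (i.e. the $(n-t)$-faces). We say $u$ extends $v$ if $F(u)\subseteq F(v)$, i.e. $u_i=v_i$ whenever $v_i\ne*$. An $H(n,q,w,t)$ design is a set of words of weight $w$ such that every word of weight $t$ is extended by exactly one of them; an $A(n,q,w,t)$ design is a set of words of weight $t$ such that every word of weight $w$ extends exactly one of them. For an $m$-partite hypergraph with $N$ vertices in each part (each part enumerated $1,\dots,N$) whose edges contain one vertex from each part, the adjacency array $M=(a_{i_1\dots i_m})$ has $a_{i_1\dots i_m}=1$ iff vertices $i_1\in$ part 1,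 …, $i_m\in$ part $m$ form an edge, else $0$; a diagonal is an $N$-element subset of $\{1,\dots,N\}^m$ any two elements of which differ in every coordinate; and $\operatorname{per}_m M=\sum_{I}\prod_{(i_1,\dots,i_m)\in I}a_{i_1\dots i_m}$ over all diagonals $I$. *)

(* Defs.v *)
From mathcomp Require Import all_boot.
Set Implicit Arguments. Unset Strict Implicit. Unset Printing Implicit Defensive.

(* Words of Q_{q*}^n: None plays the role of the symbol * . *)
Definition word (n q : nat) := {ffun 'I_n -> option 'I_q}.

Definition weight n q (u : word n q) : nat := #|[set i | u i != None]|.

Definition words_of_weight n q (t : nat) : {set word n q} :=
  [set u | weight u == t].

(* u extends v iff F(u) ⊆ F(v) iff u_i = v_i whenever v_i <> * *)
Definition extends n q (u v : word n q) : bool :=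
  [forall i, (v i != None) ==> (u i == v i)].

Definition is_H_design n q (w t : nat) (D : {set word n q}) : bool :=
  (D \subset words_of_weight n q w) &&
  [forall v in words_of_weight n q t, #|[set u in D | extends u v]| == 1].

Definition is_A_design n q (w t : nat) (D : {set word n q}) : bool :=
  (D \subset words_of_weight n q t) &&
  [forall u in words_of_weight n q w, #|[set v in D | extends u v]| == 1].

Definition is_partition_family (T : finType) (m : nat)
    (A : 'I_m -> {set T}) (S : {set T}) : Prop :=
  (forall i, A i != set0) /\
  (forall i j, i != j -> [disjoint A i & A j]) /\
  \bigcup_(i < m) A i = S.

Definition is_diagonal (m N : nat) (I : {set {ffun 'I_m -> 'I_N}}) : bool :=
  (#|I| == N) &&
  [forall x in I, forall y in I, (x != y) ==> [forall k, x k != y k]].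

Definition perm_m (m N : nat) (M : {ffun 'I_m -> 'I_N} -> nat) : nat :=
  \sum_(I : {set {ffun 'I_m -> 'I_N}} | is_diagonal I) \prod_(x in I) M x.

(* adjacency array of the m-partite hypergraph GA with parts enumerated by e:
   {b_1,...,b_m} (b_i in A_i) is an edge iff some word a of weight w
   extends all b_i *)
Definition adj_GA n q (w : nat) (m N : nat) (e : 'I_m -> 'I_N -> word n q)
    (x : {ffun 'I_m -> 'I_N}) : nat :=
  [exists a in words_of_weight n q w, [forall i, extends a (e i (x i))]].

(* Main.v *)
Require Import Defs.
From mathcomp Require Import all_boot.

Lemma exists_sub n q (a : word n q) t j :
  0 < t -> t <= weight a -> a j != None ->
  exists v : word n q, [&& weight v == t, extends a v & v j != None].
Proof.
move=> t0 tw aj.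
set Sup := [set i | a i != None].
set R := Sup :\ j.
have jS : j \in Sup by rewrite inE.
have cR : #|R| = (weight a).-1.
  by rewrite /weight -/Sup (cardsD1 j Sup) jS.
set s := take t.-1 (enum R).
have us : uniq s by rewrite take_uniq // enum_uniq.
have ss : size s = t.-1.
  rewrite size_takel // -cardE cR; by rewrite -!subn1 leq_sub2r.
have sR : forall x, x \in s -> x \in R.
  by move=> x /mem_take; rewrite mem_enum.
set S := j |: [set x in s].
exists [ffun i => if i \in S then a i else None].
have E : [set i | [ffun i => if i \in S then a i else None] i != None] = S.
  apply/setP=> i; rewrite [in LHS]inE ffunE.
  case: ifP => Hi //.
  move: Hi; rewrite !inE; case/orP => [/eqP -> //|/sR].
  by rewrite !inE => /andP[_].
apply/and3P; split.
- rewrite /weight E /S cardsU1 inE.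
  have -> : (j \in s) = false.
    by apply/negbTE/negP => /sR; rewrite !inE eqxx.
  rewrite cardsE (card_uniqP us) ss /=.
  by rewrite add1n prednK.
- apply/forallP=> i; apply/implyP; rewrite ffunE; case: ifP => //.
- by rewrite ffunE setU11.
Qed.

Lemma ext_at n q (u v : word n q) j : extends u v -> v j != None -> u j = v j.
Proof. by move=> /forallP /(_ j) /implyP H /H /eqP. Qed.

Arguments ext_at {n q u v} j.

Lemma diag_eq m N (I : {set {ffun 'I_m -> 'I_N}}) x y k :
  is_diagonal I -> x \in I -> y \in I -> x k = y k -> x = y.
Proof.
case/andP=> _ /forall_inP H xI yI exy; apply/eqP; apply/negPn/negP => nxy.
move: (forall_inP (H x xI) y yI); rewrite nxy /= => /forallP /(_ k).
by rewrite exy eqxx.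
Qed.

Lemma diag_surj m N (I : {set {ffun 'I_m -> 'I_N}}) i k :
  is_diagonal I -> exists2 x, x \in I & x i = k.
Proof.
move=> dI.
have Himg : [set (x : {ffun 'I_m -> 'I_N}) i | x in I] = [set: 'I_N].
  apply/eqP; rewrite eqEcard subsetT cardsT card_ord card_in_imset.
    move: dI; rewrite /is_diagonal => /andP[/eqP HH _]; exact: (eq_leq (esym HH)).
  by move=> x y xI yI; apply: diag_eq dI xI yI.
have : k \in [set (x : {ffun 'I_m -> 'I_N}) i | x in I] by rewrite Himg inE.
by case/imsetP => x xI ->; exists x.
Qed.

Arguments diag_eq {m N I x y} k.
Arguments diag_surj {m N I} i k.

Theorem proposition7 (n q w t : nat)
  (ht : 1 <= t) (htw : t <= w) (hwn : w <= n) (hq : 1 <= q)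
  (A : 'I_('C(w, t)) -> {set word n q})
  (hpart : is_partition_family A (words_of_weight n q t))
  (hA : forall i, is_A_design w t (A i))
  (N : nat) (e : 'I_('C(w, t)) -> 'I_N -> word n q)
  (he_inj : forall i, injective (e i))
  (he_im : forall i, [set e i x | x in [set: 'I_N]] = A i) :
  #|[set D : {set word n q} | is_H_design w t D]| =
  perm_m (adj_GA w e).
Proof.
set m := 'C(w, t).
have inA : forall i k, e i k \in A i by move=> i k; rewrite -he_im imset_f.
have wtA : forall i v, v \in A i -> weight v = t.
  move=> i v vA; case/andP: (hA i) => /subsetP /(_ v vA); rewrite inE.
  by move/eqP.
have one : forall a, weight a = w -> forall i,
    exists v, [set v in A i | extends a v] = [set v].
  move=> a wa i; case/andP: (hA i) => _ /forall_inP /(_ a).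
  by rewrite inE wa eqxx => /(_ isT) /cards1P.
have U : forall a, weight a = w -> forall i k k',
    extends a (e i k) -> extends a (e i k') -> k = k'.
  move=> a wa i k k' h1 h2; have [v Hv] := one a wa i.
  have : e i k \in [set v in A i | extends a v] by rewrite inE inA h1.
  have : e i k' \in [set v in A i | extends a v] by rewrite inE inA h2.
  rewrite Hv !inE => /eqP <- /eqP; exact: he_inj.
have Ex : forall a, weight a = w -> forall i, exists k, extends a (e i k).
  move=> a wa i; have [v Hv] := one a wa i.
  have : v \in [set v in A i | extends a v] by rewrite Hv set11.
  rewrite inE => /andP[]; rewrite -he_im => /imsetP[k _ ->] H; by exists k.
have mkx : forall a, weight a = w ->
    exists x : {ffun 'I_m -> 'I_N}, forall i, extends a (e i (x i)).
  move=> a wa; have [f Hf] := fin_all_exists (Ex a wa).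
  by exists [ffun i => f i] => i; rewrite ffunE.
have inU : forall v, weight v = t -> exists i, v \in A i.
  move=> v wv; case: hpart => _ [_ Hb].
  have : v \in words_of_weight n q t by rewrite inE wv.
  by rewrite -Hb => /bigcupP[i _ H]; exists i.
have Det1 : forall a b (x : {ffun 'I_m -> 'I_N}), weight a = w ->
    (forall i, extends a (e i (x i))) -> (forall i, extends b (e i (x i))) ->
    forall j, a j != None -> b j = a j.
  move=> a b x wa ha hb j aj.
  have [v /and3P[/eqP wv av vj]] := @exists_sub _ _ a t j ht (leq_trans htw (eq_leq (esym wa))) aj.
  have [i vi] := inU v wv.
  move: vi; rewrite -he_im => /imsetP[k _ vk]; subst v.
  have kx := U a wa i _ _ av (ha i); subst k.
  by rewrite (ext_at j (hb i) vj) (ext_at j av vj).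
have Det : forall a b (x : {ffun 'I_m -> 'I_N}), weight a = w -> weight b = w ->
    (forall i, extends a (e i (x i))) -> (forall i, extends b (e i (x i))) ->
    a = b.
  move=> a b x wa wb ha hb; apply/ffunP => j.
  case aj: (a j) => [c|].
    by rewrite (Det1 a b x wa ha hb j) ?aj.
  case bj: (b j) => [c|] //.
  by move: (Det1 b a x wb hb ha j); rewrite bj aj => ->.
pose edge (x : {ffun 'I_m -> 'I_N}) :=
  [exists a in words_of_weight n q w, [forall i, extends a (e i (x i))]].
pose good := [set I : {set {ffun 'I_m -> 'I_N}} |
                is_diagonal I && [forall x in I, edge x]].
pose g (I : {set {ffun 'I_m -> 'I_N}}) :=
  [set a in words_of_weight n q w | [exists x in I, [forall i, extends a (e i (x i))]]].
have perm_eq : perm_m (adj_GA w e) = #|good|.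
  rewrite /perm_m -sum1_card big_mkcond [RHS]big_mkcond /=.
  apply: eq_bigr => I _; rewrite inE.
  case: (is_diagonal I) => //=.
  case: (boolP [forall x in I, edge x]) => H.
    by rewrite big1 // => x xI; rewrite /adj_GA -/(edge x) (forall_inP H x xI).
  move/forall_inPn: H => [x xI nx].
  by rewrite (bigD1 x) //= /adj_GA -/(edge x) (negbTE nx) mul0n.
rewrite perm_eq.
have gH : forall I, I \in good -> is_H_design w t (g I).
  move=> I; rewrite inE => /andP[dI /forall_inP E].
  apply/andP; split.
    by apply/subsetP => a; rewrite inE => /andP[].
  apply/forall_inP => v; rewrite inE => /eqP wv.
  have [i0 vi] := inU v wv.
  move: vi; rewrite -he_im => /imsetP[k _ vk]; subst v.
  have [x xI xk] := diag_surj i0 k dI.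
  have /exists_inP[a0 aw ha0] := E x xI.
  move: aw; rewrite inE => /eqP wa0.
  apply/cards1P; exists a0; apply/setP => u; rewrite !inE.
  apply/idP/eqP.
    case/andP => /andP[/eqP wu /exists_inP[y yI /forallP hu]] uv.
    have yk := U u wu i0 _ _ (hu i0) uv.
    have xy := diag_eq i0 dI yI xI (etrans yk (esym xk)); subst y.
    exact: (Det u a0 x wu wa0 hu (fun i => forallP ha0 i)).
  move=> ->; apply/andP; split; last by rewrite -xk (forallP ha0 i0).
  by rewrite wa0 eqxx /=; apply/exists_inP; exists x.
have gsub : forall I J, I \in good -> J \in good -> g I = g J -> I \subset J.
  move=> I J; rewrite !inE => /andP[dI /forall_inP EI] /andP[dJ _] gIJ.
  apply/subsetP => x xI.
  have /exists_inP[a0 aw ha0] := EI x xI.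
  have : a0 \in g I by rewrite inE aw; apply/exists_inP; exists x.
  rewrite gIJ inE => /andP[_ /exists_inP[y yJ /forallP hy]].
  move: aw; rewrite inE => /eqP wa0.
  have -> // : x = y.
  apply/ffunP => i; exact: (U a0 wa0 i _ _ (forallP ha0 i) (hy i)).
have ginj : {in good &, injective g}.
  move=> I J Ig Jg gIJ; apply/eqP; rewrite eqEsubset.
  by rewrite (gsub I J Ig Jg gIJ) (gsub J I Jg Ig (esym gIJ)).
have gsurj : forall D, is_H_design w t D -> exists2 I, I \in good & D = g I.
  move=> D /andP[/subsetP Dw /forall_inP HD].
  have wD : forall a, a \in D -> weight a = w.
    by move=> a /Dw; rewrite inE => /eqP.
  have uniqD : forall v a b, weight v = t -> a \in D -> b \in D ->
      extends a v -> extends b v -> a = b.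
    move=> v a b wv aD bD av bv.
    have vW : v \in words_of_weight n q t by rewrite inE wv.
    have /cards1P[c Hc] := HD v vW.
    have : a \in [set u in D | extends u v] by rewrite inE aD av.
    have : b \in [set u in D | extends u v] by rewrite inE bD bv.
    by rewrite Hc !inE => /eqP -> /eqP ->.
  have exD : forall v, weight v = t -> exists2 a, a \in D & extends a v.
    move=> v wv.
    have vW : v \in words_of_weight n q t by rewrite inE wv.
    have /cards1P[c Hc] := HD v vW.
    have : c \in [set u in D | extends u v] by rewrite Hc set11.
    by rewrite inE => /andP[cD cv]; exists c.
  pose I := [set x : {ffun 'I_m -> 'I_N} |
               [exists a in D, [forall i, extends a (e i (x i))]]].
  have pw : forall x y k, x \in I -> y \in I -> x k = y k -> x = y.
    move=> x y k; rewrite !inE => /exists_inP[a aD /forallP ha].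
    move=> /exists_inP[b bD /forallP hb] xyk.
    have wv := wtA k _ (inA k (x k)).
    have hbk : extends b (e k (x k)) by rewrite xyk hb.
    have ab := uniqD _ a b wv aD bD (ha k) hbk. subst b.
    apply/ffunP => i; exact: U a (wD a aD) i _ _ (ha i) (hb i).
  exists I.
    rewrite inE; apply/andP; split.
      apply/andP; split.
        have m0 : 0 < m by rewrite bin_gt0.
        pose i0 : 'I_m := Ordinal m0.
        have Himg : [set (x : {ffun 'I_m -> 'I_N}) i0 | x in I] = setT.
          apply/setP=> k; rewrite inE; apply/imsetP.
          have wv := wtA i0 _ (inA i0 k).
          have [a aD av] := exD _ wv.
          have [x hx] := mkx a (wD a aD).
          exists x; last exact: U a (wD a aD) i0 _ _ av (hx i0).
          by rewrite inE; apply/exists_inP; exists a => //; apply/forallP.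
        have inj : {in I &, injective (fun x : {ffun 'I_m -> 'I_N} => x i0)}.
          by move=> x y xI yI; exact: pw x y i0 xI yI.
        have := @card_in_imset _ _ (fun x : {ffun 'I_m -> 'I_N} => x i0) I inj.
        by rewrite Himg cardsT card_ord => <-.
      apply/forall_inP => x xI; apply/forall_inP => y yI; apply/implyP => nxy.
      apply/forallP => k; apply/negP => /eqP /(pw x y k xI yI) exy.
      by rewrite exy eqxx in nxy.
    apply/forall_inP => x; rewrite inE => /exists_inP[a aD ha].
    by apply/exists_inP; exists a => //; exact: Dw.
  apply/setP => a; rewrite inE; apply/idP/idP.
    move=> aD; rewrite inE (wD a aD) eqxx /=.
    have [x hx] := mkx a (wD a aD).
    apply/exists_inP; exists x; last by apply/forallP.
    by rewrite inE; apply/exists_inP; exists a => //; apply/forallP.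
  case/andP; rewrite inE => /eqP wa /exists_inP[x].
  rewrite inE => /exists_inP[b bD /forallP hb] /forallP ha.
  by rewrite (Det a b x wa (wD b bD) ha hb).
suff -> : [set D | is_H_design w t D] = g @: good by exact: card_in_imset.
apply/setP => D; rewrite inE.
apply/idP/imsetP.
  by case/gsurj => I Ig ->; exists I.
by case => I Ig ->; exact: gH.
Qed.
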